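(* Let $T_1,T_2$ be tables joined on column $J$, $T_1$ having a real-valued column $W$. Fix UBS parameters $(p_1,q_1)\in(0,1]^2$ for $T_1$ and an effective sampling rate $\epsilon_2\in(0,1]$ for $T_2$ with $\epsilon_2\le p_1$. Over all UBS parameters $(p_2,q_2)$ for $T_2$ with $p_2\in[\epsilon_2,1]$ and $q_2=\epsilon_2/p_2$, the variance of $\hat J_{\mathrm{sum}}=\frac{1}{\min\{p_1,p_2\}q_1q_2}\sum_{(t_1,t_2)\in S_1\bowtie_J S_2}t_1.W$ (with $S_i=\mathrm{UBS}_{p_i,q_i}(T_i,J)$) is minimized when $p_2=p_1$ and $q_2=\epsilon_2/p_1$.
   Context: $T_1,T_2$ are finite multisets of tuples with a join attribute $J$ taking values in a finite set $\mathcal U$. $X\bowtie_J Y$ is the set of pairs $(t_1,t_2)\in X\times Y$ with $t_1.J=t_2.J$. $\mathrm{UBS}_{p,q}(T,J)$: given a hash function $h:\mathcal U\to[0,1]$, each tuple $t\in T$ with $h(t.J)<p$ is included independently with probability $q$; others are excluded. The values $h(v)$ are independent uniform on $[0,1]$, the same $h$ is used for both tables, and the Bernoulli coins are independent across all tuples and independent of $h$. *)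

(* Defs.v *)
From HB Require Import structures.
From mathcomp Require Import all_boot all_order all_algebra.
From mathcomp Require Import all_classical all_reals all_analysis.
Set Implicit Arguments. Unset Strict Implicit. Unset Printing Implicit Defensive.
Import Order.TTheory GRing.Theory Num.Theory.
Local Open Scope classical_set_scope.
Local Open Scope ring_scope.

Section UBS.
Context {d : measure_display} {T : measurableType d} {R : realType}.

Definition uniform01 (P : probability T R) (X : T -> R) : Prop :=
  measurable_fun setT X /\
  forall x : R, P [set w | X w < x] = (Num.max 0 (Num.min 1 x))%:E.

Definition mutually_independent (P : probability T R) {I : finType}
  (X : I -> T -> R) : Prop :=
  forall (S : {set I}) (B : I -> set R), (forall i, measurable (B i)) ->
    P (\bigcap_(i in [set i | i \in S]) (X i @^-1` B i)) =
    (\prod_(i in S) P (X i @^-1` B i))%E.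

(* the whole randomness of the two UBS samples:
   hash values h v (v in U), coin variables c1 i (tuples of T1),
   c2 j (tuples of T2); tuple i of T_k is kept by the coin iff c_k i < q_k,
   i.e. with probability q_k *)
Definition ubs_family {U : finType} {n1 n2 : nat} (h : U -> T -> R)
  (c1 : 'I_n1 -> T -> R) (c2 : 'I_n2 -> T -> R) :
  (U + 'I_n1 + 'I_n2)%type -> T -> R :=
  fun k => match k with
           | inl (inl v) => h v
           | inl (inr i) => c1 i
           | inr j => c2 j
           end.

(* indicator that a tuple with join value v and coin variable c belongs to
   UBS_{p,q} *)
Definition in_ubs (p q : R) (hv c : R) : R :=
  if (hv < p) && (c < q) then 1 else 0.

(* the estimator J_sum = 1/(min(p1,p2) q1 q2) * sum over joined sampled
   pairs of t1.W ; T1 tuple i has join value J1 i and weight W1 i,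
   T2 tuple j has join value J2 j *)
Definition Jsum_est {U : finType} {n1 n2 : nat}
  (J1 : 'I_n1 -> U) (W1 : 'I_n1 -> R) (J2 : 'I_n2 -> U)
  (h : U -> T -> R) (c1 : 'I_n1 -> T -> R) (c2 : 'I_n2 -> T -> R)
  (p1 q1 p2 q2 : R) : T -> R :=
  fun w => (Num.min p1 p2 * q1 * q2)^-1 *
    \sum_(i < n1) \sum_(j < n2)
      (if J1 i == J2 j then
         in_ubs p1 q1 (h (J1 i) w) (c1 i w) *
         in_ubs p2 q2 (h (J2 j) w) (c2 j w) * W1 i
       else 0).

End UBS.

(* Main.v *)
Require Import Defs.
From HB Require Import structures.
From mathcomp Require Import all_boot all_order all_algebra.
From mathcomp Require Import all_classical all_reals all_analysis.
From mathcomp.algebra_tactics Require Import ring lra.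
Import Order.TTheory GRing.Theory Num.Theory.
Local Open Scope classical_set_scope.
Local Open Scope ring_scope.

Section Lem.
Context (d : measure_display) (T : measurableType d) (R : realType)
  (P : probability T R).

Lemma Lfun_bdd (f : T -> R) (M : R) (r : R) : 1 <= r ->
  measurable_fun setT f -> (forall x, `|f x| <= M) -> f \in Lfun P r%:E.
Proof.
move=> r1 mf fM.
rewrite inE/=; apply/andP; split; rewrite inE//=.
rewrite /finite_norm unlock poweR_lty//.
apply/integrable_lty => //.
apply: (measurable_bounded_integrable (f := fun x => `|f x| `^ r)) => //.
- by apply: (le_lt_trans (probability_le1 P measurableT)); rewrite ltry.
- apply: (measurableT_comp (measurable_realfun.measurable_powR _)) => //.
  exact: measurableT_comp.
- exists (M `^ r); split; first exact: num_real.
  move=> y My x _ /=; rewrite ger0_norm ?powR_ge0//; apply: (le_trans _ (ltW My)).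
  apply: ge0_ler_powR => //; first exact: (le_trans ler01 r1).
  all: try by rewrite nnegrE.
  by rewrite nnegrE (le_trans _ (fM x)).
Qed.

Context (U : finType) (n1 n2 : nat) (h : U -> T -> R)
  (c1 : 'I_n1 -> T -> R) (c2 : 'I_n2 -> T -> R)
  (Hu : forall k, uniform01 P (ubs_family h c1 c2 k))
  (Hind : mutually_independent P (ubs_family h c1 c2)).

Local Notation I := (U + 'I_n1 + 'I_n2)%type.
Local Notation X := (ubs_family h c1 c2).

Definition ev (S : {set I}) (t : I -> R) : set T :=
  [set w | forall k, k \in S -> X k w < t k].

Lemma X_lt k a : [set w | X k w < a] = X k @^-1` `]-oo, a[%classic.
Proof. by apply/seteqP; split => w /=; rewrite in_itv. Qed.

Lemma ev_cap S t : ev S t =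
  \bigcap_(k in [set k | k \in S]) (X k @^-1` `]-oo, t k[%classic).
Proof.
apply/seteqP; split => w /=.
  by move=> H k /= kS; rewrite /= in_itv /= H.
by move=> H k kS; have := H k kS; rewrite /= in_itv.
Qed.

Lemma ev_meas S t : measurable (ev S t).
Proof.
rewrite ev_cap; apply: fin_bigcap_measurable; first exact: finite_finset.
move=> k _; rewrite -[X k @^-1` _]setTI; apply: (Hu k).1 => //.
Qed.

Lemma P_ev S t : (forall k, 0 <= t k <= 1) ->
  P (ev S t) = (\prod_(k in S) t k)%:E.
Proof.
move=> t01; rewrite ev_cap (Hind S (fun k => `]-oo, t k[%classic)); last first.
  by move=> k; exact: measurable_itv.
rewrite -prodEFin; apply: eq_bigr => k _; rewrite -X_lt (Hu k).2.
have /andP[t0 t1] := t01 k.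
by rewrite (min_r t1) (max_r t0).
Qed.


Definition nice (f : T -> R) :=
  measurable_fun setT f /\ exists M, forall x, `|f x| <= M.

Lemma nice_Lfun f r : 1 <= r -> nice f -> f \in Lfun P r%:E.
Proof. by move=> r1 [mf [M fM]]; exact: (@Lfun_bdd f M r r1 mf fM). Qed.

Lemma niceD f g : nice f -> nice g -> nice (fun w => f w + g w).
Proof.
move=> [mf [M fM]] [mg [N gN]]; split; first exact: measurable_realfun.measurable_funD.
by exists (M + N) => x; rewrite (le_trans (ler_normD _ _))// lerD.
Qed.

Lemma niceM f g : nice f -> nice g -> nice (fun w => f w * g w).
Proof.
move=> [mf [M fM]] [mg [N gN]]; split; first exact: measurable_realfun.measurable_funM.
by exists (M * N) => x; rewrite normrM ler_pM.
Qed.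

Lemma nice_cst a : nice (fun _ => a).
Proof. by split; [exact: measurable_cst | exists `|a|]. Qed.

Lemma nice_sum (A : Type) (r : seq A) (F : A -> T -> R) :
  (forall i, nice (F i)) -> nice (fun w => \sum_(i <- r) F i w).
Proof.
move=> nF; elim: r => [|a r IH].
  suff -> : (fun w => \sum_(i <- [::]) F i w) = (fun=> 0) by exact: nice_cst.
  by apply/funext => w; rewrite big_nil.
suff -> : (fun w => \sum_(i <- a :: r) F i w) =
  (fun w => F a w + \sum_(i <- r) F i w) by exact: niceD.
by apply/funext => w; rewrite big_cons.
Qed.

Lemma nice_ind E : measurable E -> nice (\1_E).
Proof.
move=> mE; split; first exact: measurable_realfun.measurable_indic.
by exists 1 => x; rewrite indicE; case: (x \in E); rewrite ?normr1 ?normr0.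
Qed.

Lemma E_sum (A : Type) (r : seq A) (F : A -> T -> R) :
  (forall i, nice (F i)) ->
  ('E_P[fun w => (\sum_(i <- r) F i w)%R] = \sum_(i <- r) 'E_P[F i])%E.
Proof.
move=> nF; elim: r => [|a r IH].
  rewrite big_nil; have -> : (fun w => \sum_(i <- [::]) F i w) = cst 0.
    by apply/funext => w; rewrite big_nil.
  by rewrite expectation_cst.
have -> : (fun w => \sum_(i <- a :: r) F i w) =
   (F a \+ (fun w => \sum_(i <- r) F i w))%R.
  by apply/funext => w; rewrite big_cons.
rewrite expectationD ?IH ?big_cons//; first exact: (@nice_Lfun _ 1 (lexx 1) (nF a)).
apply: (@nice_Lfun _ 1 (lexx 1)); exact: nice_sum.
Qed.

Lemma E_scale a f : nice f -> ('E_P[fun w => (a * f w)%R] = a%:E * 'E_P[f])%E.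
Proof.
move=> nf; rewrite -expectationZl//; last exact: (@nice_Lfun _ 1 (lexx 1)).
suff -> : (a \o* f) = (fun w => a * f w) by [].
apply/funext => w /=.
by rewrite mulrC.
Qed.

Lemma E_ind_scale a S t : (forall k, 0 <= t k <= 1) ->
  ('E_P[fun w => (a * \1_(ev S t) w)%R] = (a * \prod_(k in S) t k)%:E)%E.
Proof.
move=> t01; rewrite E_scale; last exact/nice_ind/ev_meas.
by rewrite expectation_indic ?P_ev ?EFinM//; exact: ev_meas.
Qed.


Definition tt (m a b : R) : I -> R := fun k =>
  match k with inl (inl _) => m | inl (inr _) => a | inr _ => b end.

Definition mkS (A : {set U}) (B : {set 'I_n1}) (C : {set 'I_n2}) : {set I} :=
  [set k | match k with
           | inl (inl v) => v \in A | inl (inr i) => i \in B | inr j => j \in C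
           end].

Lemma prod_mkS m a b A B C :
  \prod_(k in mkS A B C) tt m a b k = m ^+ #|A| * a ^+ #|B| * b ^+ #|C|.
Proof.
rewrite big_sumType big_sumType /=.
rewrite (eq_bigl (fun i => i \in A)); last by move=> i; rewrite inE.
rewrite (eq_bigl (fun i => i \in B)); last by move=> i; rewrite inE.
rewrite (eq_bigl (fun i => i \in C)); last by move=> i; rewrite inE.
by rewrite !prodr_const.
Qed.

Lemma mkSU A B C A' B' C' :
  mkS A B C :|: mkS A' B' C' = mkS (A :|: A') (B :|: B') (C :|: C').
Proof. by apply/setP => [[[v|i]|j]]; rewrite !inE. Qed.

Lemma indM S S' t w :
  \1_(ev S t) w * \1_(ev S' t) w = \1_(ev (S :|: S') t) w :> R.
Proof.
rewrite !indicE.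
have -> : (w \in ev (S :|: S') t) = (w \in ev S t) && (w \in ev S' t).
  apply/idP/andP; rewrite !inE /ev /=.
    by move=> H; split => k kS; apply: H; rewrite inE kS ?orbT.
  by move=> [H1 H2] k; rewrite inE => /orP[/H1|/H2].
by case: (w \in ev S t); case: (w \in ev S' t); rewrite ?mulr1 ?mulr0 ?mul0r.
Qed.

Lemma tt01 m a b : 0 <= m <= 1 -> 0 <= a <= 1 -> 0 <= b <= 1 ->
  forall k, 0 <= tt m a b k <= 1.
Proof. by move=> ? ? ? [[v|i]|j]. Qed.

Context (J1 : 'I_n1 -> U) (W1 : 'I_n1 -> R) (J2 : 'I_n2 -> U).

Lemma in_ubs_ev (p1 q1 p2 q2 : R) i j w : J1 i = J2 j ->
  in_ubs p1 q1 (h (J1 i) w) (c1 i w) * in_ubs p2 q2 (h (J2 j) w) (c2 j w) =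
  \1_(ev (mkS [set J1 i] [set i] [set j]) (tt (Num.min p1 p2) q1 q2)) w.
Proof.
move=> Jij; rewrite indicE -Jij /in_ubs.
have -> : (w \in ev (mkS [set J1 i] [set i] [set j]) (tt (Num.min p1 p2) q1 q2))
  = [&& h (J1 i) w < p1, h (J1 i) w < p2, c1 i w < q1 & c2 j w < q2].
  apply/idP/idP; rewrite inE /ev /=.
    move=> H.
    have := H (inl (inl (J1 i))); rewrite inE set11 /= lt_min => /(_ isT) /andP[-> ->].
    have := H (inl (inr i)); rewrite inE set11 /= => /(_ isT) ->.
    by have := H (inr j); rewrite inE set11 /= => /(_ isT) ->.
  move=> /and4P[H1 H2 H3 H4] [[v|i']|j']; rewrite !inE /= => /eqP ->//.
  by rewrite lt_min H1 H2.
by case: (h (J1 i) w < p1); case: (h (J1 i) w < p2); case: (c1 i w < q1);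
  case: (c2 j w < q2); rewrite /= ?mulr1 ?mulr0 ?mul0r.
Qed.


Lemma E_sumR (A : Type) (r : seq A) (F : A -> T -> R) (f : A -> R) :
  (forall i, nice (F i)) -> (forall i, 'E_P[F i] = (f i)%:E)%E ->
  ('E_P[fun w => (\sum_(i <- r) F i w)%R] = (\sum_(i <- r) f i)%:E)%E.
Proof.
move=> nF EF; rewrite E_sum// -sumEFin; apply: eq_bigr => i _; exact: EF.
Qed.

Section Params.
Context (p1 q1 p2 q2 : R) (hp1 : 0 < p1 <= 1) (hq1 : 0 < q1 <= 1)
  (hp2 : 0 < p2 <= 1) (hq2 : 0 < q2 <= 1).

Local Notation m := (Num.min p1 p2).
Local Notation t := (tt (Num.min p1 p2) q1 q2).
Local Notation cc := ((Num.min p1 p2 * q1 * q2)^-1).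

Definition g i j : T -> R := fun w =>
  if J1 i == J2 j then W1 i * \1_(ev (mkS [set J1 i] [set i] [set j]) t) w
  else 0.

Lemma Jsum_eq : Jsum_est J1 W1 J2 h c1 c2 p1 q1 p2 q2 =
  (fun w => cc * \sum_(i < n1) \sum_(j < n2) g i j w).
Proof.
apply/funext => w; rewrite /Jsum_est; congr (_ * _).
apply: eq_bigr => i _; apply: eq_bigr => j _; rewrite /g.
by case: eqP => // Jij; rewrite in_ubs_ev // mulrC.
Qed.

Lemma nice_g i j : nice (g i j).
Proof.
rewrite /g; case: (J1 i == J2 j); last exact: nice_cst.
by apply: niceM; [exact: nice_cst | exact/nice_ind/ev_meas].
Qed.

Lemma m01 : 0 <= m <= 1.
Proof.
case/andP: hp1 => a b; case/andP: hp2 => c e.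
have m0 : 0 < m by rewrite lt_min a c.
by rewrite ltW //= ge_min b.
Qed.

Lemma t01 : forall k, 0 <= t k <= 1.
Proof.
apply: tt01; first exact: m01.
  by case/andP: hq1 => a b; rewrite ltW.
by case/andP: hq2 => a b; rewrite ltW.
Qed.

Lemma E_g i j : ('E_P[g i j] =
  (if J1 i == J2 j then W1 i * (m * q1 * q2) else 0)%:E)%E.
Proof.
rewrite /g; case: (J1 i == J2 j); last by rewrite expectation_cst.
by rewrite E_ind_scale ?prod_mkS ?cards1 //; exact: t01.
Qed.


Lemma m0 : 0 < m.
Proof. by case/andP: hp1 => a _; case/andP: hp2 => b _; rewrite lt_min a b. Qed.

Lemma EX : ('E_P[Jsum_est J1 W1 J2 h c1 c2 p1 q1 p2 q2] =
  (\sum_(i < n1) \sum_(j < n2) (if J1 i == J2 j then W1 i else 0))%:E)%E.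
Proof.
rewrite Jsum_eq E_scale; last by apply: nice_sum => i; apply: nice_sum => j; exact: nice_g.
rewrite (@E_sumR _ _ _ (fun i => \sum_(j < n2)
   (if J1 i == J2 j then W1 i * (m * q1 * q2) else 0))); first last.
- by move=> i; apply: E_sumR => j; [exact: nice_g | exact: E_g].
- by move=> i; apply: nice_sum => j; exact: nice_g.
rewrite -EFinM; congr EFin.
rewrite big_distrr; apply: eq_bigr => i _; rewrite big_distrr; apply: eq_bigr => j _.
case: ifP => _ /=; last by rewrite mulr0.
have hm := m0; case/andP: hq1 => a _; case/andP: hq2 => b _.
by rewrite mulrCA mulVf ?mulr1 // !mulf_neq0 // gt_eqF.
Qed.

Definition G i j i' j' : T -> R := fun w => g i j w * g i' j' w.

Lemma nice_G i j i' j' : nice (G i j i' j').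
Proof. by apply: niceM; exact: nice_g. Qed.

Lemma E_G i j i' j' : ('E_P[G i j i' j'] =
  (if (J1 i == J2 j) && (J1 i' == J2 j') then
     W1 i * W1 i' * (m ^+ (J1 i != J1 i').+1 * q1 ^+ (i != i').+1 *
                     q2 ^+ (j != j').+1)
   else 0)%:E)%E.
Proof.
rewrite /G /g; case: (J1 i == J2 j); case: (J1 i' == J2 j') => /=.
- rewrite (_ : (fun w => _) = (fun w => W1 i * W1 i' *
    \1_(ev (mkS [set J1 i; J1 i'] [set i; i'] [set j; j']) t) w)); last first.
    by apply/funext => w; rewrite mulrACA indM mkSU.
  by rewrite E_ind_scale ?prod_mkS ?cards2 //; exact: t01.
- rewrite (_ : (fun w => _) = cst 0); first by rewrite expectation_cst.
  by apply/funext => w; rewrite mulr0.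
- rewrite (_ : (fun w => _) = cst 0); first by rewrite expectation_cst.
  by apply/funext => w; rewrite mul0r.
- rewrite (_ : (fun w => _) = cst 0); first by rewrite expectation_cst.
  by apply/funext => w; rewrite mul0r.
Qed.


Local Notation F4 := (\sum_(i < n1) \sum_(j < n2) \sum_(i' < n1) \sum_(j' < n2)
   (if (J1 i == J2 j) && (J1 i' == J2 j') then
     W1 i * W1 i' * (m ^+ (J1 i != J1 i').+1 * q1 ^+ (i != i').+1 *
                     q2 ^+ (j != j').+1)
   else 0)).

Lemma nice_J : nice (Jsum_est J1 W1 J2 h c1 c2 p1 q1 p2 q2).
Proof.
rewrite Jsum_eq; apply: niceM; first exact: nice_cst.
by apply: nice_sum => i; apply: nice_sum => j; exact: nice_g.
Qed.

Lemma EX2 : ('E_P[(Jsum_est J1 W1 J2 h c1 c2 p1 q1 p2 q2) ^+ 2] =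
  (cc ^+ 2 * F4)%:E)%E.
Proof.
rewrite Jsum_eq exprfctE.
rewrite (_ : (fun w => _) = fun w => cc ^+ 2 * \sum_(i < n1) \sum_(j < n2)
   \sum_(i' < n1) \sum_(j' < n2) G i j i' j' w); last first.
  apply/funext => w; rewrite exprMn; congr (_ * _).
  rewrite expr2 big_distrl; apply: eq_bigr => i _; rewrite big_distrl.
  apply: eq_bigr => j _ /=; rewrite big_distrr; apply: eq_bigr => i' _ /=.
  by rewrite big_distrr.
rewrite E_scale; last first.
  apply: nice_sum => i; apply: nice_sum => j; apply: nice_sum => i'.
  apply: nice_sum => j'; exact: nice_G.
suff -> : ('E_P[fun w => (\sum_(i < n1) \sum_(j < n2)
   \sum_(i' < n1) \sum_(j' < n2) G i j i' j' w)%R] = F4%:E)%E by [].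
apply: E_sumR => i.
  apply: nice_sum => j; apply: nice_sum => i'; apply: nice_sum => j'.
  exact: nice_G.
apply: E_sumR => j.
  apply: nice_sum => i'; apply: nice_sum => j'; exact: nice_G.
apply: E_sumR => i'.
  apply: nice_sum => j'; exact: nice_G.
apply: E_sumR => j'; [exact: nice_G | exact: E_G].
Qed.

Lemma Var_eq : ('V_P[Jsum_est J1 W1 J2 h c1 c2 p1 q1 p2 q2] =
  (cc ^+ 2 * F4 - (\sum_(i < n1) \sum_(j < n2)
       (if J1 i == J2 j then W1 i else 0)) ^+ 2)%:E)%E.
Proof.
rewrite varianceE; last by apply: nice_Lfun; [rewrite ler1n | exact: nice_J].
by rewrite EX2 EX EFinB EFin_expe.
Qed.

End Params.

Definition Phi (m q1 q2 : R) (i : 'I_n1) (j : 'I_n2) (i' : 'I_n1) (j' : 'I_n2) : R :=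
  if J1 i == J1 i' then
    m^-1 * (if i == i' then q1^-1 else 1) * (if j == j' then q2^-1 else 1)
  else 1.

Lemma phi_id (m q1 q2 : R) i j i' j' : m != 0 -> q1 != 0 -> q2 != 0 ->
  J1 i = J2 j -> J1 i' = J2 j' ->
  (m * q1 * q2)^-1 ^+ 2 * (m ^+ (J1 i != J1 i').+1 * q1 ^+ (i != i').+1 *
     q2 ^+ (j != j').+1) = Phi m q1 q2 i j i' j'.
Proof.
move=> m0 q10 q20 Jij Jij'; rewrite /Phi.
case: (eqVneq (J1 i) (J1 i')) => [e|ne] /=.
  case: (eqVneq i i') => [_|ni]; case: (eqVneq j j') => [_|nj] /=;
  by field; rewrite ?m0 ?q10 ?q20.
have ni : i != i' by apply: contraNneq ne => ->.
have nj : j != j' by apply: contraNneq ne => ej; rewrite Jij Jij' ej.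
rewrite ni nj /=; by field; rewrite ?m0 ?q10 ?q20.
Qed.


Lemma grp1 (f : U -> R) :
  \sum_(i < n1) \sum_(i' < n1)
     (if J1 i == J1 i' then W1 i * W1 i' * f (J1 i) else 0) =
  \sum_(v : U) f v * (\sum_(i < n1) (if J1 i == v then W1 i else 0)) ^+ 2.
Proof.
symmetry.
transitivity (\sum_(v : U) \sum_(i < n1) \sum_(i' < n1)
   (f v * (if J1 i == v then W1 i else 0) * (if J1 i' == v then W1 i' else 0))).
  apply: eq_bigr => v _.
  rewrite [X in _ * X]expr2 mulrA.
  rewrite [f v * _]big_distrr /= big_distrl /=.
  by apply: eq_bigr => i _; rewrite big_distrr.
rewrite exchange_big /=; apply: eq_bigr => i _.
rewrite exchange_big /=; apply: eq_bigr => i' _.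
rewrite (bigD1 (J1 i)) //= big1 ?addr0; last first.
  by move=> v /negbTE nv; rewrite eq_sym nv mulr0 mul0r.
rewrite eqxx eq_sym; case: ifP => _; last by rewrite mulr0.
by rewrite [RHS]mulrC mulrA.
Qed.

Lemma grp (q1 : R) (f : U -> R) : 0 < q1 <= 1 -> (forall v, 0 <= f v) ->
  0 <= \sum_(i < n1) \sum_(i' < n1)
     (if J1 i == J1 i' then
        W1 i * W1 i' * (if i == i' then q1^-1 else 1) * f (J1 i) else 0).
Proof.
move=> /andP[q0 q1le] f0.
have q1i : 0 <= q1^-1 - 1 by rewrite subr_ge0 invf_ge1.
have spl : forall i i', (if J1 i == J1 i' then
        W1 i * W1 i' * (if i == i' then q1^-1 else 1) * f (J1 i) else 0) =
   (if J1 i == J1 i' then W1 i * W1 i' * f (J1 i) else 0) +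
   (if J1 i == J1 i' then
        W1 i * W1 i' * (if i == i' then q1^-1 - 1 else 0) * f (J1 i) else 0).
  move=> i i'; case: ifP => _; last by rewrite addr0.
  by case: ifP => _; ring.
under eq_bigr => i _ do under eq_bigr => i' _ do rewrite spl.
under eq_bigr => i _ do rewrite big_split /=.
rewrite big_split /= grp1; apply: addr_ge0.
  by apply: sumr_ge0 => v _; rewrite mulr_ge0 ?sqr_ge0.
apply: sumr_ge0 => i _; apply: sumr_ge0 => i' _.
case: ifP => _ //; case: eqP => [<-|_]; last by rewrite mulr0 mul0r.
by rewrite mulr_ge0 // mulr_ge0 // -expr2 sqr_ge0.
Qed.


Lemma F4_Phi (m q1 q2 : R) : m != 0 -> q1 != 0 -> q2 != 0 ->
  (m * q1 * q2)^-1 ^+ 2 * (\sum_(i < n1) \sum_(j < n2) \sum_(i' < n1) \sum_(j' < n2)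
   (if (J1 i == J2 j) && (J1 i' == J2 j') then
     W1 i * W1 i' * (m ^+ (J1 i != J1 i').+1 * q1 ^+ (i != i').+1 *
                     q2 ^+ (j != j').+1)
   else 0)) =
  \sum_(i < n1) \sum_(j < n2) \sum_(i' < n1) \sum_(j' < n2)
   (if (J1 i == J2 j) && (J1 i' == J2 j') then
     W1 i * W1 i' * Phi m q1 q2 i j i' j' else 0).
Proof.
move=> m0 q10 q20.
rewrite big_distrr; apply: eq_bigr => i _ /=; rewrite big_distrr.
apply: eq_bigr => j _ /=; rewrite big_distrr; apply: eq_bigr => i' _ /=.
rewrite big_distrr; apply: eq_bigr => j' _ /=.
case: ifP => [/andP[/eqP e1 /eqP e2]|_]; last by rewrite mulr0.
by rewrite mulrCA phi_id.
Qed.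

Lemma step2 (q1 a b : R) : 0 < q1 <= 1 -> 0 <= a -> 0 <= b ->
  0 <= \sum_(i < n1) \sum_(j < n2) \sum_(i' < n1) \sum_(j' < n2)
   (if (J1 i == J2 j) && (J1 i' == J2 j') then
     W1 i * W1 i' * (if J1 i == J1 i' then
        (if i == i' then q1^-1 else 1) * (if j == j' then b else a) else 0)
   else 0).
Proof.
move=> hq a0 b0.
pose f v := \sum_(j < n2) \sum_(j' < n2)
   (if (J2 j == v) && (J2 j' == v) then (if j == j' then b else a) else 0).
have f0 : forall v, 0 <= f v.
  move=> v; apply: sumr_ge0 => j _; apply: sumr_ge0 => j' _.
  by case: ifP => // _; case: ifP.
suff -> : \sum_(i < n1) \sum_(j < n2) \sum_(i' < n1) \sum_(j' < n2)
   (if (J1 i == J2 j) && (J1 i' == J2 j') then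
     W1 i * W1 i' * (if J1 i == J1 i' then
        (if i == i' then q1^-1 else 1) * (if j == j' then b else a) else 0)
   else 0) = \sum_(i < n1) \sum_(i' < n1)
     (if J1 i == J1 i' then
        W1 i * W1 i' * (if i == i' then q1^-1 else 1) * f (J1 i) else 0).
  exact: grp.
apply: eq_bigr => i _; rewrite exchange_big /=; apply: eq_bigr => i' _.
case: eqP => [e1|ne]; last first.
  by rewrite big1 // => j _; rewrite big1 // => j' _; case: ifP; rewrite ?mulr0.
rewrite /f big_distrr; apply: eq_bigr => j _ /=; rewrite big_distrr.
apply: eq_bigr => j' _ /=.
rewrite -e1 (eq_sym (J2 j)) (eq_sym (J2 j')).
by case: ifP => _; rewrite ?mulr0 // mulrA.
Qed.

End Lem.

Theorem lemma6 (d : measure_display) (T : measurableType d) (R : realType)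
  (P : probability T R) (U : finType) (n1 n2 : nat)
  (J1 : 'I_n1 -> U) (W1 : 'I_n1 -> R) (J2 : 'I_n2 -> U)
  (h : U -> T -> R) (c1 : 'I_n1 -> T -> R) (c2 : 'I_n2 -> T -> R)
  (p1 q1 eps2 : R) :
  (forall k, uniform01 P (ubs_family h c1 c2 k)) ->
  mutually_independent P (ubs_family h c1 c2) ->
  0 < p1 <= 1 -> 0 < q1 <= 1 -> 0 < eps2 <= 1 -> eps2 <= p1 ->
  forall p2 : R, eps2 <= p2 <= 1 ->
    ('V_P[Jsum_est J1 W1 J2 h c1 c2 p1 q1 p1 (eps2 / p1)]
     <= 'V_P[Jsum_est J1 W1 J2 h c1 c2 p1 q1 p2 (eps2 / p2)])%E.
Proof.
move=> Hu Hind hp1 hq1 /andP[e0 e1] ep1 p2 /andP[ep2 p21].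
have /andP[p10 p11] := hp1; have /andP[q10 q11] := hq1.
have p20 : 0 < p2 := lt_le_trans e0 ep2.
have hp2 : 0 < p2 <= 1 by rewrite p20.
have hq2a : 0 < eps2 / p1 <= 1 by rewrite divr_gt0 // ler_pdivrMr // mul1r.
have hq2b : 0 < eps2 / p2 <= 1 by rewrite divr_gt0 // ler_pdivrMr // mul1r.
rewrite (Var_eq _ _ _ _ _ _ _ _ _ _ Hu Hind J1 W1 J2 _ _ _ _ hp1 hq1 hp1 hq2a).
rewrite (Var_eq _ _ _ _ _ _ _ _ _ _ Hu Hind J1 W1 J2 _ _ _ _ hp1 hq1 hp2 hq2b).
rewrite lee_fin lerD2r.
have mb0 : 0 < Num.min p1 p2 by rewrite lt_min p10.
rewrite !F4_Phi ?gt_eqF ?divr_gt0 //.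
rewrite -subr_ge0.
set a := (Num.min p1 p2)^-1 - (Num.min p1 p1)^-1.
set b := (Num.min p1 p2)^-1 * (eps2 / p2)^-1 - (Num.min p1 p1)^-1 * (eps2 / p1)^-1.
have a0 : 0 <= a.
  by rewrite subr_ge0 minxx lef_pV2 ?posrE // ge_min lexx.
have b0 : 0 <= b.
  rewrite subr_ge0 minxx !invf_div.
  rewrite (_ : p1^-1 * (p1/eps2) = 1 * eps2^-1); last first.
    by field; rewrite !gt_eqF.
  rewrite (_ : (Num.min p1 p2)^-1 * (p2/eps2) = (p2 / Num.min p1 p2) * eps2^-1);
    last by field; rewrite !gt_eqF.
  rewrite ler_wpM2r ?invr_ge0 ?(ltW e0) //.
  by rewrite ler_pdivlMr // mul1r ge_min lexx orbT.
apply: (le_trans (step2 _ _ _ _ J1 W1 J2 _ _ _ hq1 a0 b0)); rewrite le_eqVlt; apply/orP; left.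
apply/eqP; rewrite -sumrB; apply: eq_bigr => i _; rewrite -sumrB.
apply: eq_bigr => j _; rewrite -sumrB; apply: eq_bigr => i' _; rewrite -sumrB.
apply: eq_bigr => j' _; case: ifP => _; last by rewrite subr0.
rewrite /Phi /a /b; case: ifP => _; last by rewrite mulr0 subrr.
by case: ifP => _; case: ifP => _; ring.
by rewrite minxx.
Qed.
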